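(* Let $\mathcal{S},\mathcal{A}$ be finite nonempty sets, $\lambda\in(0,1)$, $b>0$, $r_{sa}\in\mathbb{R}$, let $\bm{\nu}$ satisfy $\bm{\nu}_s\in\Delta(\mathcal{A})$ for each $s\in\mathcal{S}$, and for each $(s,a)$ let $\mathcal{U}_{sa}\subseteq\Delta(\mathcal{S})$ be a nonempty set over which the minima below are attained. For $\bm{x}\in(\mathbb{R}_{>0})^{\mathcal{S}}$ define $$\tilde t(\bm{x})_s=\sum_{a\in\mathcal{A}}\nu_{sa}\exp(b\,r_{sa})\min_{\bm{p}\in\mathcal{U}_{sa}}\prod_{s'\in\mathcal{S}}x_{s'}^{\lambda p_{s'}}.$$ Then for each $s\in\mathcal{S}$ the function $\bm{x}\mapsto\tilde t(\bm{x})_s$ is concave on $(\mathbb{R}_{>0})^{\mathcal{S}}$.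
   Context: $\Delta(\mathcal{X})$ denotes the probability simplex over a finite set $\mathcal{X}$. *)

(* Defs.v *)
From HB Require Import structures.
From mathcomp Require Import all_boot all_order all_algebra.
From mathcomp Require Import all_classical all_reals all_analysis.
Set Implicit Arguments. Unset Strict Implicit. Unset Printing Implicit Defensive.
Import Order.TTheory GRing.Theory Num.Theory.
Local Open Scope classical_set_scope.
Local Open Scope ring_scope.

Definition in_simplex (R : realType) (T : finType) (p : T -> R) : Prop :=
  (forall i, 0 <= p i) /\ \sum_(i : T) p i = 1.

Definition wprod (R : realType) (S : finType) (lam : R) (x p : S -> R) : R :=
  \prod_(s' : S) (x s') `^ (lam * p s').

(* min over U (attainment is assumed in the theorem; then inf = min) *)
Definition minU (R : realType) (S : finType) (lam : R)
  (U : set (S -> R)) (x : S -> R) : R :=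
  inf [set wprod lam x p | p in U].

Definition ttilde (R : realType) (S A : finType) (lam b : R)
  (r nu : S -> A -> R) (U : S -> A -> set (S -> R)) (x : S -> R) (s : S) : R :=
  \sum_(a : A) nu s a * expR (b * r s a) * minU lam (U s a) x.

Definition pos_vec (R : realType) (S : finType) (x : S -> R) : Prop :=
  forall s, 0 < x s.

Definition concave_on_pos (R : realType) (S : finType) (f : (S -> R) -> R) : Prop :=
  forall (x y : S -> R) (t : R), pos_vec x -> pos_vec y -> 0 <= t <= 1 ->
    t * f x + (1 - t) * f y <= f (fun s => t * x s + (1 - t) * y s).

(* Main.v *)
Require Import Defs.
From HB Require Import structures.
From mathcomp Require Import all_boot all_order all_algebra.
From mathcomp Require Import all_classical all_reals all_analysis.
From mathcomp Require Import ring lra.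
Import Order.TTheory GRing.Theory Num.Theory.
Local Open Scope classical_set_scope.
Local Open Scope ring_scope.

Section H.
Variable R : realType.

Lemma ln_le_sub1 {u : R} : 0 < u -> ln u <= u - 1.
Proof.
move=> u0; have := expR_ge1Dx (ln u); rewrite lnK ?posrE // => h.
by rewrite lerBrDl.
Qed.

Lemma logamgm (S : finType) (w a : S -> R) :
  (forall i, 0 <= w i) -> (forall i, 0 < a i) -> \sum_i w i < 1 ->
  \sum_i w i * ln (a i) <= ln (\sum_i w i * a i + (1 - \sum_i w i)).
Proof.
move=> w0 a0 W1.
set W := \sum_i w i; set M := _ + (1 - W).
have sa0 : 0 <= \sum_i w i * a i.
  by apply: sumr_ge0 => i _; apply: mulr_ge0 => //; apply: ltW.
have M0 : 0 < M by rewrite /M; apply: ltr_wpDl => //; rewrite subr_gt0.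
have step : forall i, w i * ln (a i) <= w i * (ln M + a i / M - 1).
  move=> i; apply: ler_wpM2l => //.
  have := ln_le_sub1 (divr_gt0 (a0 i) M0).
  rewrite ln_div ?posrE //; lra.
apply: le_trans (ler_sum _ (fun i _ => step i)) _.
have -> : \sum_i w i * (ln M + a i / M - 1) = W * (ln M - 1) + (\sum_i w i * a i) / M.
  rewrite /W mulr_suml mulr_suml -big_split /=; apply: eq_bigr => i _; ring.
have hM : \sum_i w i * a i = M - (1 - W) by rewrite /M; ring.
rewrite hM.
have h0 : 0 < M^-1 by rewrite invr_gt0.
have := ln_le_sub1 h0; rewrite lnV ?posrE // => h.
have -> : (M - (1 - W)) / M = 1 - (1 - W) / M by field; rewrite gt_eqF.
have h2 : (1 - W) * (1 - M^-1) <= (1 - W) * ln M.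
  apply: ler_wpM2l; [by rewrite subr_ge0 ltW | lra].
have : (1 - W) / M = (1 - W) * M^-1 by [].
lra.
Qed.

Lemma geo_bound (S : finType) (w x z : S -> R) :
  (forall i, 0 <= w i) -> (forall i, 0 < x i) -> (forall i, 0 < z i) -> \sum_i w i < 1 ->
  expR (\sum_i w i * ln (x i)) <=
  expR (\sum_i w i * ln (z i)) * (\sum_i w i * (x i / z i) + (1 - \sum_i w i)).
Proof.
move=> w0 x0 z0 W1.
have -> : \sum_i w i * ln (x i) = \sum_i w i * ln (z i) + \sum_i w i * ln (x i / z i).
  rewrite -big_split /=; apply: eq_bigr => i _.
  rewrite ln_div ?posrE //; ring.
rewrite expRD; apply: ler_wpM2l; first exact: expR_ge0.
have hpos : forall i, 0 < x i / z i by move=> i; apply: divr_gt0.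
have := @logamgm S w (fun i => x i / z i) w0 hpos W1.
rewrite -ler_expR lnK //.
rewrite posrE; apply: ltr_wpDl; last by rewrite subr_gt0.
by apply: sumr_ge0 => i _; apply: mulr_ge0 => //; apply: ltW.
Qed.

Lemma geo_concave (S : finType) (w x y : S -> R) (t : R) :
  (forall i, 0 <= w i) -> (forall i, 0 < x i) -> (forall i, 0 < y i) -> \sum_i w i < 1 ->
  0 <= t <= 1 ->
  t * expR (\sum_i w i * ln (x i)) + (1 - t) * expR (\sum_i w i * ln (y i)) <=
  expR (\sum_i w i * ln (t * x i + (1 - t) * y i)).
Proof.
move=> w0 x0 y0 W1 /andP[t0 t1].
have t1' : 0 <= 1 - t by rewrite subr_ge0.
set z := fun i => t * x i + (1 - t) * y i.
have z0 : forall i, 0 < z i.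
  move=> i; rewrite /z; have := x0 i; have := y0 i.
  case: (ltP 0 t) => ht.
    move=> hy hx; have := mulr_gt0 ht hx; have := mulr_ge0 t1' (ltW hy); lra.
  have -> : t = 0 by apply/le_anti; rewrite ht t0.
  by move=> hy _; rewrite mul0r add0r subr0 mul1r.
have b1 := ler_wpM2l t0 (@geo_bound S w x z w0 x0 z0 W1).
have b2 := ler_wpM2l t1' (@geo_bound S w y z w0 y0 z0 W1).
apply: le_trans (lerD b1 b2) _.
set G := expR _.
set W := \sum_i w i.
have key : (\sum_i w i * (x i / z i)) * t + (\sum_i w i * (y i / z i)) * (1 - t) = W.
  rewrite !mulr_suml -big_split /=; apply: eq_bigr => i _.
  have : z i != 0 by rewrite gt_eqF.
  rewrite /z => hz; field => //.
have -> : t * (G * (\sum_i w i * (x i / z i) + (1 - W))) +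
    (1 - t) * (G * (\sum_i w i * (y i / z i) + (1 - W))) =
    G * (((\sum_i w i * (x i / z i)) * t + (\sum_i w i * (y i / z i)) * (1 - t)) + (1 - W)).
  ring.
by rewrite key addrC subrK mulr1.
Qed.

Lemma wprodE (S : finType) (lam : R) (x p : S -> R) : pos_vec x ->
  wprod lam x p = expR (\sum_i (lam * p i) * ln (x i)).
Proof.
move=> xp; rewrite /wprod expR_sum; apply: eq_bigr => i _.
by rewrite /powR gt_eqF.
Qed.

Lemma minU_eq (S : finType) (lam : R) (U : set (S -> R)) (x p : S -> R) :
  U p -> (forall q, U q -> wprod lam x p <= wprod lam x q) ->
  minU lam U x = wprod lam x p.
Proof.
move=> Up hp; rewrite /minU; apply/le_anti/andP; split.
  apply: ge_inf; last by exists p.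
  by exists (wprod lam x p) => _ [q Uq <-]; exact: hp.
by apply: lb_le_inf; [exists (wprod lam x p), p | move=> _ [q Uq <-]; exact: hp].
Qed.
End H.

Theorem lemma3 (R : realType) (S A : finType) (s0 : S) (a0 : A)
  (lam b : R) (r nu : S -> A -> R) (U : S -> A -> set (S -> R)) :
  0 < lam < 1 -> 0 < b ->
  (forall s, in_simplex (nu s)) ->
  (forall s a, U s a !=set0) ->
  (forall s a p, U s a p -> in_simplex p) ->
  (forall s a (x : S -> R), pos_vec x ->
     exists2 p, U s a p & forall q, U s a q -> wprod lam x p <= wprod lam x q) ->
  forall s, concave_on_pos (fun x => ttilde lam b r nu U x s).
Proof.
move=> /andP[l0 l1] b0 hnu hne hU hmin s x y t xp yp /andP[t0 t1].
have t1' : 0 <= 1 - t by rewrite subr_ge0.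
set z := fun i => t * x i + (1 - t) * y i.
have zp : pos_vec z.
  move=> i; rewrite /z; have := xp i; have := yp i.
  case: (ltP 0 t) => ht.
    move=> hy hx; have := mulr_gt0 ht hx; have := mulr_ge0 t1' (ltW hy); lra.
  have -> : t = 0 by apply/le_anti; rewrite ht t0.
  by move=> hy _; rewrite mul0r add0r subr0 mul1r.
rewrite /ttilde !mulr_sumr -big_split /=; apply: ler_sum => a _.
have c0 : 0 <= nu s a * expR (b * r s a).
  by apply: mulr_ge0; [case: (hnu s) => h _; exact: h | exact: expR_ge0].
have [pz Upz hpz] := hmin s a z zp.
have [px Upx hpx] := hmin s a x xp.
have [py Upy hpy] := hmin s a y yp.
rewrite (@minU_eq R S lam (U s a) z pz Upz hpz) (@minU_eq R S lam (U s a) x px Upx hpx) (@minU_eq R S lam (U s a) y py Upy hpy).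
have hx := hpx _ Upz; have hy := hpy _ Upz.
have main : t * wprod lam x pz + (1 - t) * wprod lam y pz <= wprod lam z pz.
  rewrite !wprodE //.
  case: (hU _ _ _ Upz) => pz0 pz1.
  apply: (@geo_concave R S (fun i => lam * pz i) x y t) => //.
  - by move=> i; apply: mulr_ge0 => //; apply: ltW.
  - by rewrite -mulr_sumr pz1 mulr1.
  - by rewrite t0 t1.
have : t * wprod lam x px + (1 - t) * wprod lam y py <= wprod lam z pz.
  apply: le_trans main; apply: lerD; exact: ler_wpM2l.
move=> h.
have := ler_wpM2l c0 h.
set C := nu s a * expR (b * r s a) => h2.
suff -> : t * (C * wprod lam x px) + (1 - t) * (C * wprod lam y py) =
  C * (t * wprod lam x px + (1 - t) * wprod lam y py) by [].
ring.
Qed.
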